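(* Let $X=[0,\infty)$, $K(x,y)=x\wedge y$ on $X\times X$, and let $0<x_1<x_2<\cdots$ be real numbers and $(y_j)_{j\in\mathbb{N}}$ real numbers. If $\sum_{j\in\mathbb{N}}(y_{j+1}-y_j)^2/(x_{j+1}-x_j)<\infty$, then there exists $f\in\mathscr{H}(K)$ with $f(x_j)=y_j$ for all $j\in\mathbb{N}$.
   Context: $\mathscr{H}(K)$ is the reproducing kernel Hilbert space of $K(x,y)=\min(x,y)$ on $[0,\infty)$; it consists of the functions $f$ on $[0,\infty)$ with $f(0)=0$ and distributional derivative $f'\in L^2([0,\infty))$, with $\|f\|^2_{\mathscr{H}(K)}=\int_0^\infty|f'(x)|^2dx$. *)

(* Defs.v *)
From HB Require Import structures.
From mathcomp Require Import all_boot all_order all_algebra.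
From mathcomp Require Import all_classical all_reals all_analysis.
Set Implicit Arguments. Unset Strict Implicit. Unset Printing Implicit Defensive.
Import Order.TTheory GRing.Theory Num.Theory.
Import numFieldNormedType.Exports.
Local Open Scope classical_set_scope.
Local Open Scope ring_scope.

(* The reproducing kernel Hilbert space H(K) of K(x,y) = min(x,y) on [0,oo):
   functions f on [0,oo) with f(0) = 0 whose distributional derivative g lies
   in L^2([0,oo)), i.e. f(t) = \int_0^t g for t >= 0 with g square-integrable
   on [0,oo).  Functions on [0,oo) are represented as R -> R; values at
   negative arguments are irrelevant. *)
Definition in_HK_min (R : realType) (f : R -> R) : Prop :=
  exists g : R -> R,
    measurable_fun (`[0%R, +oo[%classic : set R) g /\
    (\int[lebesgue_measure]_(s in (`[0%R, +oo[%classic : set R)) ((g s) ^+ 2)%:E < +oo)%E /\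
    forall t : R, 0 <= t ->
      lebesgue_measure.-integrable (`[0%R, t]%classic : set R) (EFin \o g) /\
      f t = Rintegral lebesgue_measure (`[0%R, t]%classic : set R) g.

(* Main.v *)
Require Import Defs.
From HB Require Import structures.
From mathcomp Require Import all_boot all_order all_algebra.
From mathcomp Require Import all_classical all_reals all_analysis.
From mathcomp Require Import measurable_realfun.
From mathcomp Require Import ring lra.
Set Implicit Arguments. Unset Strict Implicit. Unset Printing Implicit Defensive.
Import Order.TTheory GRing.Theory Num.Theory.
Import numFieldNormedType.Exports.
Local Open Scope classical_set_scope.
Local Open Scope ring_scope.

Section Cor.
Variable R : realType.
Variables x y : nat -> R.
Hypothesis x0pos : 0 < x 0%N.
Hypothesis xinc : forall j, x j < x j.+1.

Definition dd j := (y j.+1 - y j) / (x j.+1 - x j).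
Definition PJ (s : R) : set nat := [set j | x j < s <= x j.+1].
Definition gg (s : R) : R :=
  if (0 < s <= x 0%N) then y 0%N / x 0%N else
  let j := xget 0%N (PJ s) in if x j < s <= x j.+1 then dd j else 0.

Lemma xmono i j : (i < j)%N -> x i.+1 <= x j.
Proof.
elim: j => [//|j IH]; rewrite ltnS leq_eqVlt => /orP[/eqP->//|/IH h].
exact: (le_trans h (ltW (xinc j))).
Qed.

Lemma xle i j : (i <= j)%N -> x i <= x j.
Proof.
rewrite leq_eqVlt => /orP[/eqP->//|/xmono h]; exact: le_trans (ltW (xinc i)) h.
Qed.

Lemma xpos j : 0 < x j.
Proof. exact: (lt_le_trans x0pos (xle (leq0n j))). Qed.

Lemma PJ_uniq s i j : PJ s i -> PJ s j -> i = j.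
Proof.
rewrite /PJ /= => /andP[a1 a2] /andP[b1 b2].
case: (ltngtP i j) => // h.
- by exfalso; have := xmono h; clear h; lra.
- by exfalso; have := xmono h; clear h; lra.
Qed.

Lemma gg_first s : 0 < s <= x 0%N -> gg s = y 0%N / x 0%N.
Proof. by rewrite /gg => ->. Qed.

Lemma gg_J j s : x j < s <= x j.+1 -> gg s = dd j.
Proof.
move=> hs; have hj : PJ s j by [].
rewrite /gg; have -> : (0 < s <= x 0%N) = false.
  apply/negbTE; move: hs => /andP[h1 _]; have := xle (leq0n j); lra.
by rewrite (xget_unique 0%N hj (fun i hi => PJ_uniq hi hj)) hs.
Qed.

Lemma gg_none s : ~~ (0 < s <= x 0%N) -> (forall j, ~ PJ s j) -> gg s = 0.
Proof.
move=> h1 h2; rewrite /gg (negbTE h1) /=.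
by case: ifPn => // h; exfalso; exact: (h2 _ h).
Qed.

Lemma gg_neg s : s <= 0 -> gg s = 0.
Proof.
move=> hs; apply: gg_none; first by apply/negP => /andP[]; lra.
move=> j /andP[h _]; have := xpos j; lra.
Qed.

Definition E (n : nat) : set R :=
  match n with
  | 0%N => `]-oo, 0]
  | 1%N => `]0, x 0%N]
  | 2%N => ~` (`]-oo, 0] `|` `]0, x 0%N] `|` \bigcup_j `]x j, x j.+1]%classic)
  | n.+3 => `]x n, x n.+1]
  end.

Lemma mE n : measurable (E n).
Proof.
case: n => [|[|[|n]]] //=.
apply: measurableC; apply: measurableU; first exact: measurableU.
by apply: bigcup_measurable.
Qed.

Lemma E_cover : \bigcup_n E n = setT.
Proof.
apply/seteqP; split => // s _.
case: (pselect ((`]-oo, 0] `|` `]0, x 0%N] `|` \bigcup_j `]x j, x j.+1]%classic) s)).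
- move=> [[h|h]|[j _ h]]; [by exists 0%N|by exists 1%N|by exists j.+3].
- by move=> h; exists 2%N.
Qed.

Lemma mgg : measurable_fun setT gg.
Proof.
rewrite -E_cover; apply/measurable_fun_bigcup; first exact: mE.
move=> n.
case: n => [|[|[|n]]].
- apply: (@eq_measurable_fun _ _ _ _ _ (cst (0:R))); last exact: measurable_cst.
  move=> s; rewrite inE /= in_itv /= => h; by rewrite gg_neg.
- apply: (@eq_measurable_fun _ _ _ _ _ (cst (y 0%N / x 0%N))); last exact: measurable_cst.
  move=> s; rewrite inE /= in_itv /= => h; by rewrite gg_first.
- apply: (@eq_measurable_fun _ _ _ _ _ (cst (0:R))); last exact: measurable_cst.
  move=> s; rewrite inE /= => h; rewrite gg_none //.
  + apply/negP => hs; apply: h; left; right => /=; by rewrite in_itv.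
  + move=> j hj; apply: h; right; exists j => //=; by rewrite in_itv.
- apply: (@eq_measurable_fun _ _ _ _ _ (cst (dd n))); last exact: measurable_cst.
  move=> s; rewrite inE /= in_itv /= => h; by rewrite (gg_J h).
Qed.


Local Open Scope ereal_scope.

Lemma leb_itv_oc (a b : R) : (a < b)%R ->
  lebesgue_measure (`]a, b]%classic : set R) = (b - a)%:E.
Proof. move=> ab; have := lebesgue_measure_itv `]a, b]; rewrite /= lte_fin ab -EFinD; exact. Qed.

Lemma sq_int :
  \sum_(0 <= j <oo) (((y j.+1 - y j) ^+ 2 / (x j.+1 - x j))%:E) < +oo ->
  \int[lebesgue_measure]_(s in (`[0%R, +oo[%classic : set R)) ((gg s) ^+ 2)%:E < +oo.
Proof.
move=> hs.
set D := (`[0%R, +oo[%classic : set R).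
have mD : measurable D by exact: measurable_itv.
pose h1 (s : R) := ((y 0%N / x 0%N) ^+ 2 * \1_(`]0%R, x 0%N]%classic) s)%R%:E.
pose h2 j (s : R) := ((dd j) ^+ 2 * \1_(`]x j, x j.+1]%classic) s)%R%:E.
have h1ge0 s : 0 <= h1 s by rewrite lee_fin mulr_ge0 ?sqr_ge0 // indicE ler0n.
have h2ge0 j s : 0 <= h2 j s by rewrite lee_fin mulr_ge0 ?sqr_ge0 // indicE ler0n.
have mh1 : measurable_fun D h1.
  apply/measurable_EFinP; apply: measurable_funM; first exact: measurable_cst.
  exact: measurable_indic.
have mh2 j : measurable_fun D (h2 j).
  apply/measurable_EFinP; apply: measurable_funM; first exact: measurable_cst.
  exact: measurable_indic.
have mS : measurable_fun D (fun s => \sum_(j <oo) h2 j s).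
  have := (@ge0_emeasurable_sum _ _ _ D h2 predT (fun k s _ _ => h2ge0 k s) (fun k _ => mh2 k)).
  by apply: eq_measurable_fun => s _; apply: eq_eseriesr.
have le1 : \int[lebesgue_measure]_(s in D) ((gg s) ^+ 2)%:E <=
           \int[lebesgue_measure]_(s in D) (h1 s + \sum_(j <oo) h2 j s).
  apply: ge0_le_integral => //.
  - by move=> s _; rewrite lee_fin sqr_ge0.
  - apply/measurable_EFinP; apply: measurable_funX.
    exact: measurable_funS mgg.
  - apply: emeasurable_funD => //.
  - move=> s _.
    have S0 : 0 <= \sum_(j <oo) h2 j s by apply: nneseries_ge0 => j _ _.
    case: (boolP (0 < s <= x 0%N)%R) => hs1.
      rewrite gg_first // /h1 indicE mem_set ?mulr1; last by rewrite /= in_itv.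
      exact: leeDl.
    case: (pselect (exists j, PJ s j)) => [[j hj]|hn].
      rewrite (gg_J hj); apply: (le_trans _ (leeDr _ (h1ge0 s))).
      apply: (le_trans _ (nneseries_lim_ge j.+1 _)); last by move=> n _ _.
      rewrite big_nat_recr //=; apply: (le_trans _ (leeDr _ _)).
        by rewrite /h2 indicE mem_set ?mulr1 //= in_itv.
      by apply: sume_ge0 => n _.
    rewrite gg_none //; last by move=> j hj; apply: hn; exists j.
    by rewrite expr0n /= adde_ge0.
rewrite (le_lt_trans le1) // ge0_integralD //; last by move=> s _; exact: nneseries_ge0.
rewrite integral_nneseries //.
have intI (c a b : R) : (a < b)%R -> (0 <= a)%R ->
    \int[lebesgue_measure]_(s in D) ((c ^+ 2 * \1_(`]a, b]%classic) s)%R%:E) = (c ^+ 2 * (b - a))%:E.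
  move=> ab a0; under eq_integral do rewrite EFinM.
  rewrite ge0_integralZl_EFin //.
  - rewrite integral_indic // setIidl.
    + by rewrite -[X in _ * X]/(lebesgue_measure (`]a, b]%classic : set R)) leb_itv_oc // -EFinM.
    + move=> s /=; rewrite !in_itv /= => /andP[h _]; rewrite /D /= in_itv /= andbT.
      exact: le_trans a0 (ltW h).
  all: try (by move=> s _; rewrite lee_fin indicE ler0n).
  all: try (by apply/measurable_EFinP; exact: measurable_indic).
  all: try exact: sqr_ge0.
apply: lte_add_pinfty.
  by rewrite /h1 intI // ltry.
rewrite (@eq_eseriesr _ _ (fun j => ((y j.+1 - y j) ^+ 2 / (x j.+1 - x j))%:E)) //.
move=> j _; rewrite /h2 intI //; last exact: ltW (xpos j).
rewrite /dd; congr EFin.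
have : (x j.+1 - x j != 0)%R by rewrite subr_eq0 gt_eqF.
by move=> hne; field.
Qed.


Lemma int_gg t :
  \sum_(0 <= j <oo) (((y j.+1 - y j) ^+ 2 / (x j.+1 - x j))%:E) < +oo ->
  (0 <= t)%R ->
  lebesgue_measure.-integrable (`[0%R, t]%classic : set R) (EFin \o gg).
Proof.
move=> hs t0.
have mD : measurable (`[0%R, t]%classic : set R) by exact: measurable_itv.
have mD' : measurable (`[0%R, +oo[%classic : set R) by exact: measurable_itv.
have mg : measurable_fun (`[0%R, t]%classic : set R) gg.
  exact: measurable_funS mgg.
have mg2 : measurable_fun (`[0%R, t]%classic : set R) (fun s => (gg s ^+ 2)%:E).
  apply/measurable_EFinP; exact: measurable_funX.
apply/integrableP; split; first exact/measurable_EFinP.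
apply: (@le_lt_trans _ _ (\int[lebesgue_measure]_(s in (`[0%R, t]%classic : set R)) (cst 1%E s + (gg s ^+ 2)%:E))).
  apply: ge0_le_integral => //.
  - apply: measurableT_comp => //; exact/measurable_EFinP.
  - apply: emeasurable_funD => //; exact: measurable_cst.
  - move=> s _; rewrite /= -EFinD lee_fin -(real_normK (num_real (gg s))).
    have := normr_ge0 (gg s); nra.
rewrite ge0_integralD //; try (by move=> s _; rewrite lee_fin ?sqr_ge0); try exact: measurable_cst.
apply: lte_add_pinfty.
  rewrite integral_cst // mul1e.
  have := lebesgue_measure_itv `[0%R, t]; rewrite /=.
  case: ifPn => _ ->; by rewrite ?ltry.
apply: (le_lt_trans _ (sq_int hs)).
apply: ge0_subset_integral => //.
- apply/measurable_EFinP; apply: measurable_funX; exact: measurable_funS mgg.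
- by move=> s _; rewrite lee_fin sqr_ge0.
- move=> s /=; rewrite !in_itv /= => /andP[h _]; by rewrite h.
Qed.


Definition FF (t : R) : R := Rintegral lebesgue_measure (`[0%R, t]%classic : set R) gg.

Lemma FF_x0 : FF (x 0%N) = y 0%N.
Proof.
have h1 : \int[lebesgue_measure]_(s in (`]0%R, x 0%N]%classic : set R)) (EFin \o gg) s =
          \int[lebesgue_measure]_(s in (`[0%R, x 0%N]%classic : set R)) (EFin \o gg) s.
  apply: integral_itv_obnd_cbnd.
  apply/measurable_EFinP; exact: measurable_funS mgg.
rewrite /FF /Rintegral -h1.
rewrite (eq_integral (cst (y 0%N / x 0%N)%:E)); last first.
  by move=> s; rewrite inE /= in_itv /= => h; rewrite /= gg_first.
have mI : measurable (`]0%R, x 0%N]%classic : set R) by exact: measurable_itv.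
rewrite integral_cst //.
rewrite -[X in _ * X]/(lebesgue_measure (`]0%R, x 0%N]%classic : set R)) leb_itv_oc //.
rewrite -EFinM /=; have := xpos 0; move=> hp; field; by rewrite gt_eqF.
Qed.

Lemma FF_step k :
  \sum_(0 <= j <oo) (((y j.+1 - y j) ^+ 2 / (x j.+1 - x j))%:E) < +oo ->
  FF (x k.+1) = (FF (x k) + dd k * (x k.+1 - x k))%R.
Proof.
move=> hs; rewrite /FF.
have e : (`[0%R, x k.+1]%classic : set R) = `[0%R, x k]%classic `|` `]x k, x k.+1]%classic.
  apply: itv_bndbnd_setU; rewrite bnd_simp; [exact: ltW (xpos k) | exact: ltW (xinc k)].
have mA : measurable (`[0%R, x k]%classic : set R) by exact: measurable_itv.
have mB : measurable (`]x k, x k.+1]%classic : set R) by exact: measurable_itv.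
have hint : lebesgue_measure.-integrable
    ((`[0%R, x k]%classic : set R) `|` `]x k, x k.+1]%classic) (EFin \o gg).
  rewrite -e; apply: int_gg => //; exact: ltW (xpos _).
have hdis : [disjoint (`[0%R, x k]%classic : set R) & `]x k, x k.+1]%classic].
  apply/disj_setPS => s [/=]; rewrite !in_itv /= => /andP[_ h1] /andP[h2 _].
  by move: h1 h2; lra.
rewrite e Rintegral_setU //.
congr (_ + _)%R.
rewrite (@eq_Rintegral _ _ _ _ _ (cst (dd k))); last first.
  move=> s; rewrite inE => hs1; change (gg s = dd k); apply: gg_J; move: hs1; by rewrite /= in_itv.
rewrite Rintegral_cst; last exact: measurable_itv.
rewrite -[X in fine X]/(lebesgue_measure (`]x k, x k.+1]%classic : set R)) leb_itv_oc //.
Qed.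

Lemma FF_val :
  \sum_(0 <= j <oo) (((y j.+1 - y j) ^+ 2 / (x j.+1 - x j))%:E) < +oo ->
  forall k, FF (x k) = y k.
Proof.
move=> hs; elim => [|k IH]; first exact: FF_x0.
rewrite FF_step // IH /dd.
have : (x k.+1 - x k != 0)%R by rewrite subr_eq0 gt_eqF.
by move=> hne; field.
Qed.

End Cor.

Theorem corollary10p7 (R : realType) (x y : nat -> R) :
  0 < x 0%N ->
  (forall j : nat, x j < x j.+1) ->
  (\sum_(0 <= j <oo) (((y j.+1 - y j) ^+ 2 / (x j.+1 - x j))%:E) < +oo)%E ->
  exists f : R -> R, in_HK_min f /\ forall j : nat, f (x j) = y j.
Proof.
move=> x0 xi hs.
exists (FF x y); split; last exact: FF_val.
exists (gg x y); split.
  exact: (measurable_funS measurableT (@subsetT _ _) (@mgg R x y x0 xi)).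
split; first exact: sq_int.
move=> t t0; split => //.
exact: int_gg.
Qed.
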